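(* Let $\phi:[0,\infty)\to\mathbb R$ be convex with $\phi(1)=0$, and let $E$ be the associated entropy. For every $\mathbf p\in\Delta^N$ with $\langle\mathbf u^{(1)},\mathbf p\rangle>0$ one has $E(\mathbf M\mathbf p)\le E(\mathbf p)$. Moreover, if $\phi$ is strictly convex, then $E(\mathbf M\mathbf p)=E(\mathbf p)$ if and only if $\mathbf p$ belongs to the quasi-stationary set $\mathcal Q$.
   Context: Fix an integer $N\ge 2$ and a type selection vector $(\mathsf s_0,\dots,\mathsf s_N)$ with $\mathsf s_0=0$, $\mathsf s_N=1$ and $0<\mathsf s_i<1$ for $1\le i\le N-1$. The Moran matrix $\mathbf M=(M_{ij})_{i,j=0}^N$ is defined by $M_{ij}=0$ if $|i-j|>1$, $M_{i+1,i}=\frac{N-i}{N}\mathsf s_i$, $M_{i-1,i}=\frac{i}{N}(1-\mathsf s_i)$, $M_{ii}=1-M_{i+1,i}-M_{i-1,i}$ (column-stochastic; $M_{ij}$ is the probability of going from state $j$ to state $i$; probability vectors evolve by $\mathbf p\mapsto\mathbf M\mathbf p$). The core matrix $\widetilde{\mathbf M}=(M_{ij})_{i,j=1}^{N-1}$ has a simple Perron eigenvalue $\mu_1>0$ with positive left/right eigenvectors $\widetilde{\mathbf u}^{(1)},\widetilde{\mathbf v}^{(1)}\in\mathbb R^{N-1}$, normalized by $\sum_i v^{(1)}_i=1$, $\sum_i u^{(1)}_iv^{(1)}_i=1$. Let $\Delta^N=\{\mathbf x\in\mathbb R^{N+1}:x_i\ge0,\ \sum_{i=0}^Nx_i=1\}$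 and, for $\mathbf p=(p_0,\dots,p_N)$, $\langle\mathbf u^{(1)},\mathbf p\rangle:=\sum_{i=1}^{N-1}u^{(1)}_ip_i$. For $\mathbf p\in\Delta^N$ with $\langle\mathbf u^{(1)},\mathbf p\rangle>0$ the entropy is \[ E(\mathbf p)=\sum_{i=1}^{N-1}\phi\!\left(\frac{p_i}{v^{(1)}_i\langle\mathbf u^{(1)},\mathbf p\rangle}\right)v^{(1)}_iu^{(1)}_i . \] Let $\hat{\mathbf v}^{(1)}=(0,v^{(1)}_1,\dots,v^{(1)}_{N-1},0)\in\mathbb R^{N+1}$ and $\mathbf e_0,\mathbf e_N$ the standard basis vectors of $\mathbb R^{N+1}$ at positions $0$ and $N$. The quasi-stationary set is $\mathcal Q=\{\alpha\mathbf e_0+\lambda\hat{\mathbf v}^{(1)}+\beta\mathbf e_N:\ \alpha,\beta,\lambda\ge0,\ \alpha+\beta+\lambda=1\}$. *)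

(* Defs.v *)
From mathcomp Require Import all_boot all_order all_algebra.
From mathcomp Require Import reals.
Set Implicit Arguments. Unset Strict Implicit. Unset Printing Implicit Defensive.
Import Order.TTheory GRing.Theory Num.Theory.
Local Open Scope ring_scope.

Section Moran.
Variables (R : realType) (N : nat) (s : 'I_N.+1 -> R).

(* M_{ij}: probability of going from state j to state i (column-stochastic). *)
Definition moran_entry (i j : 'I_N.+1) : R :=
  let up := ((N - j)%:R / N%:R) * s j in
  let down := (j%:R / N%:R) * (1 - s j) in
  if (i : nat) == j.+1 then up
  else if (j : nat) == i.+1 then down
  else if i == j then 1 - up - down
  else 0.

Definition moran : 'M[R]_N.+1 := \matrix_(i, j) moran_entry i j.

Definition moran_apply (p : 'I_N.+1 -> R) : 'I_N.+1 -> R :=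
  fun i => \sum_(j < N.+1) moran i j * p j.

Definition interior (i : 'I_N.+1) : bool := (0 < i)%N && (i < N)%N.

Definition in_simplex (p : 'I_N.+1 -> R) : Prop :=
  (forall i, 0 <= p i) /\ \sum_(i < N.+1) p i = 1.

Definition upair (u p : 'I_N.+1 -> R) : R :=
  \sum_(i < N.+1 | interior i) u i * p i.

Definition entropy (phi : R -> R) (u v p : 'I_N.+1 -> R) : R :=
  \sum_(i < N.+1 | interior i) phi (p i / (v i * upair u p)) * v i * u i.

Definition vhat (v : 'I_N.+1 -> R) : 'I_N.+1 -> R :=
  fun i => if interior i then v i else 0.

Definition quasi_stationary (v : 'I_N.+1 -> R) (p : 'I_N.+1 -> R) : Prop :=
  exists alpha beta lambda : R,
    [/\ 0 <= alpha, 0 <= beta, 0 <= lambda, alpha + beta + lambda = 1 &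
      forall i : 'I_N.+1,
        p i = alpha * (i == ord0)%:R + lambda * vhat v i + beta * (i == ord_max)%:R].
End Moran.

Definition convex_on_nonneg (R : realType) (phi : R -> R) : Prop :=
  forall x y t : R, 0 <= x -> 0 <= y -> 0 <= t <= 1 ->
    phi (t * x + (1 - t) * y) <= t * phi x + (1 - t) * phi y.

Definition strictly_convex_on_nonneg (R : realType) (phi : R -> R) : Prop :=
  forall x y t : R, 0 <= x -> 0 <= y -> x != y -> 0 < t < 1 ->
    phi (t * x + (1 - t) * y) < t * phi x + (1 - t) * phi y.

(* Main.v *)
Require Import Defs.
From mathcomp Require Import all_boot all_order all_algebra.
From mathcomp Require Import reals.
From mathcomp Require Import ring lra zify.
Import Order.TTheory GRing.Theory Num.Theory.
Local Open Scope ring_scope.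
Lemma sum_nonneg0 (R : realType) (I : eqType) (r : seq I) (P : pred I) (F : I -> R) :
  (forall j, P j -> 0 <= F j) -> \sum_(j <- r | P j) F j = 0 ->
  forall j, j \in r -> P j -> F j = 0.
Proof.
move=> hF; elim: r => [|a r IH] //; rewrite big_cons.
case: ifP => Pa hs j; rewrite inE => /orP[/eqP->|jr] Pj.
- have h1 := hF _ Pa; have h2 : 0 <= \sum_(j <- r | P j) F j by apply: sumr_ge0.
  lra.
- apply: IH => //; have h1 := hF _ Pa; have h2 : 0 <= \sum_(j <- r | P j) F j by apply: sumr_ge0.
  lra.
- by rewrite Pj in Pa.
- exact: IH.
Qed.

Lemma jensen_seq (R : realType) (phi : R -> R) (I : eqType) (r : seq I) (P : pred I)
  (w x : I -> R) :
  convex_on_nonneg phi -> (forall j, P j -> 0 <= w j) -> (forall j, P j -> 0 <= x j) ->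
  \sum_(j <- r | P j) w j = 1 ->
  phi (\sum_(j <- r | P j) w j * x j) <= \sum_(j <- r | P j) w j * phi (x j).
Proof.
move=> hc hw hx; elim: r w hw => [|a r IH] w hw.
  by rewrite big_nil => /eqP; rewrite eq_sym oner_eq0.
rewrite !big_cons; case: ifP => Pa hs; last exact: IH.
set S := \sum_(j <- r | P j) w j in hs.
have S0 : 0 <= S by apply: sumr_ge0.
have wa0 := hw _ Pa.
have [wa1|wa1] := eqVneq (w a) 1.
  have S00 : S = 0 by lra.
  have z := @sum_nonneg0 _ _ r P w hw S00.
  rewrite big_seq_cond big1; last by move=> j /andP[jr Pj]; rewrite z // mul0r.
  rewrite (big_seq_cond _ (fun j => w j * phi (x j))) big1;
    last by move=> j /andP[jr Pj]; rewrite z // mul0r.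
  by rewrite !addr0 wa1 !mul1r.
have Sp : 0 < S by lra.
have hs' : \sum_(j <- r | P j) (w j / S) = 1 by rewrite -mulr_suml divff // gt_eqF.
have hw' : forall j, P j -> 0 <= w j / S by move=> j Pj; rewrite divr_ge0 // hw.
have := IH _ hw' hs'.
set y := \sum_(j <- r | P j) w j / S * x j.
have y0 : 0 <= y by apply: sumr_ge0 => j Pj; rewrite mulr_ge0 ?hw' ?hx.
have ey : \sum_(j <- r | P j) w j * x j = S * y.
  rewrite /y mulr_sumr; apply: eq_bigr => j _; field; lra.
have ez : \sum_(j <- r | P j) w j * phi (x j) = S * \sum_(j <- r | P j) w j / S * phi (x j).
  rewrite mulr_sumr; apply: eq_bigr => j _; field; lra.
rewrite ey ez => hy.
have eS : S = 1 - w a by lra.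
have := hc (x a) y (w a) (hx _ Pa) y0; rewrite wa0 /= -eS => /(_ ltac:(lra)) h.
have : S * phi y <= S * \sum_(j <- r | P j) w j / S * phi (x j) by rewrite ler_wpM2l.
lra.
Qed.

Lemma jensen (R : realType) (phi : R -> R) (I : finType) (P : pred I) (w x : I -> R) :
  convex_on_nonneg phi -> (forall j, P j -> 0 <= w j) -> (forall j, P j -> 0 <= x j) ->
  \sum_(j | P j) w j = 1 ->
  phi (\sum_(j | P j) w j * x j) <= \sum_(j | P j) w j * phi (x j).
Proof. exact: jensen_seq. Qed.

Lemma jensen_strict (R : realType) (phi : R -> R) (I : finType) (P : pred I) (w x : I -> R) a :
  convex_on_nonneg phi -> strictly_convex_on_nonneg phi ->
  (forall j, P j -> 0 <= w j) -> (forall j, P j -> 0 <= x j) ->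
  \sum_(j | P j) w j = 1 -> P a -> 0 < w a -> x a != \sum_(j | P j) w j * x j ->
  phi (\sum_(j | P j) w j * x j) < \sum_(j | P j) w j * phi (x j).
Proof.
move=> hc hsc hw hx hs Pa wa0 hne.
rewrite (bigD1 a Pa) /= in hs; rewrite (bigD1 a Pa) /= in hne.
rewrite (bigD1 a Pa) /= [X in _ < X](bigD1 a Pa) /=.
set S := \sum_(j | P j && (j != a)) w j in hs.
have hwP : forall j, P j && (j != a) -> 0 <= w j by move=> j /andP[Pj _]; apply: hw.
have hxP : forall j, P j && (j != a) -> 0 <= x j by move=> j /andP[Pj _]; apply: hx.
have S0 : 0 <= S by apply: sumr_ge0.
have [wa1|wa1] := eqVneq (w a) 1.
  have S00 : S = 0 by lra.
  have z := psumr_eq0P hwP S00.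
  have e0 : \sum_(j | P j && (j != a)) w j * x j = 0.
    by apply: big1 => j Pj; rewrite z // mul0r.
  by move: hne; rewrite e0 addr0 wa1 mul1r eqxx.
have Sp : 0 < S by lra.
have hs' : \sum_(j | P j && (j != a)) (w j / S) = 1 by rewrite -mulr_suml divff // gt_eqF.
have hw' : forall j, P j && (j != a) -> 0 <= w j / S by move=> j Pj; rewrite divr_ge0 // hwP.
have := @jensen _ _ _ _ _ _ hc hw' hxP hs'.
set y := \sum_(j | P j && (j != a)) w j / S * x j.
have y0 : 0 <= y by apply: sumr_ge0 => j Pj; rewrite mulr_ge0 ?hw' ?hxP.
have ey : \sum_(j | P j && (j != a)) w j * x j = S * y.
  rewrite /y mulr_sumr; apply: eq_bigr => j _; field; lra.
have ez : \sum_(j | P j && (j != a)) w j * phi (x j) = S * \sum_(j | P j && (j != a)) w j / S * phi (x j).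
  rewrite mulr_sumr; apply: eq_bigr => j _; field; lra.
rewrite ey in hne *; rewrite ez => hy.
have eS : S = 1 - w a by lra.
have xy : x a != y.
  apply: contra hne => /eqP ->; apply/eqP; rewrite eS; ring.
have := hsc (x a) y (w a) (hx _ Pa) y0 xy; rewrite wa0 /= -eS => /(_ ltac:(lra)) h.
have : S * phi y <= S * \sum_(j | P j && (j != a)) w j / S * phi (x j) by rewrite ler_wpM2l.
lra.
Qed.
Lemma moran_out (R : realType) (N : nat) (s : 'I_N.+1 -> R) (i j : 'I_N.+1) :
  s ord0 = 0 -> s ord_max = 1 -> interior i -> ~~ interior j -> moran s i j = 0.
Proof.
move=> s0 sN /andP[i0 iN] hj; rewrite mxE /moran_entry.
have [j0|jN] : j = ord0 \/ j = ord_max.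
  move: hj; rewrite /interior negb_and -leqNgt -ltnNge => /orP[h|h].
    by left; apply/val_inj => /=; lia.
  by right; apply/val_inj => /=; have := ltn_ord j; lia.
- subst j; rewrite s0 /= mulr0.
  case: ifP => // _; rewrite ifF //; apply/negbTE/eqP => /(congr1 val) /=; lia.
- subst j; rewrite sN /= subrr mulr0.
  case: eqP => [/= h|_]; first lia.
  case: eqP => // _; case: eqP => // /(congr1 val) /=; lia.
Qed.

Lemma moran_parts (R : realType) (N : nat) (s : 'I_N.+1 -> R) (j : 'I_N.+1) :
  interior j -> 0 < s j < 1 ->
  [/\ 0 < (N - j)%:R / N%:R * s j, 0 < j%:R / N%:R * (1 - s j) &
      0 < 1 - (N - j)%:R / N%:R * s j - j%:R / N%:R * (1 - s j)].
Proof.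
move=> /andP[j0 jN] /andP[s0 s1].
have a0 : (0 : R) < (N - j)%:R by rewrite ltr0n subn_gt0.
have b0 : (0 : R) < j%:R by rewrite ltr0n.
have k0 : (0 : R) < N%:R^-1 by rewrite invr_gt0 ltr0n; lia.
have e : (N - j)%:R * N%:R^-1 + j%:R * N%:R^-1 = 1 :> R.
  rewrite -mulrDl -natrD subnK; last by apply: ltnW.
  by rewrite divff // pnatr_eq0; lia.
have s1' : 0 < 1 - s j by rewrite subr_gt0.
split.
- by rewrite !mulr_gt0.
- by rewrite !mulr_gt0.
- have h1 : 0 < (N - j)%:R * N%:R^-1 * (1 - s j) by rewrite !mulr_gt0.
  have h2 : 0 < j%:R * N%:R^-1 * s j by rewrite !mulr_gt0.
  lra.
Qed.

Lemma moran_ge0 (R : realType) (N : nat) (s : 'I_N.+1 -> R) (i j : 'I_N.+1) :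
  interior j -> 0 < s j < 1 -> 0 <= moran s i j.
Proof.
move=> hj hs; have [h1 h2 h3] := @moran_parts _ _ s _ hj hs.
rewrite mxE /moran_entry.
case: eqP => _; first exact: ltW.
case: eqP => _; first exact: ltW.
case: eqP => _ //; exact: ltW.
Qed.

Lemma moran_diag_gt0 (R : realType) (N : nat) (s : 'I_N.+1 -> R) (i : 'I_N.+1) :
  interior i -> 0 < s i < 1 -> 0 < moran s i i.
Proof.
move=> hj hs; have [h1 h2 h3] := @moran_parts _ _ s _ hj hs.
rewrite mxE /moran_entry.
rewrite eqxx ifF; first rewrite ifF //.
all: apply/negbTE; apply/eqP; lia.
Qed.

Lemma moran_sup_gt0 (R : realType) (N : nat) (s : 'I_N.+1 -> R) (i j : 'I_N.+1) :
  interior j -> 0 < s j < 1 -> (j : nat) = i.+1 -> 0 < moran s i j.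
Proof.
move=> hj hs e; have [h1 h2 h3] := @moran_parts _ _ s _ hj hs.
rewrite mxE /moran_entry.
rewrite ifF; first by rewrite ifT // e.
apply/negbTE; apply/eqP; lia.
Qed.

Lemma not_interior (N : nat) (j : 'I_N.+1) : ~~ interior j -> j = ord0 \/ j = ord_max.
Proof.
rewrite /interior negb_and -leqNgt -ltnNge => /orP[h|h].
  by left; apply/val_inj => /=; lia.
by right; apply/val_inj => /=; have := ltn_ord j; lia.
Qed.

Theorem lemma3 (R : realType) (N : nat) (s : 'I_N.+1 -> R)
    (mu : R) (u v : 'I_N.+1 -> R) (phi : R -> R) :
  (2 <= N)%N ->
  s ord0 = 0 -> s ord_max = 1 ->
  (forall i : 'I_N.+1, interior i -> 0 < s i < 1) ->
  0 < mu ->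
  (forall i : 'I_N.+1, interior i -> 0 < u i) ->
  (forall i : 'I_N.+1, interior i -> 0 < v i) ->
  (forall i : 'I_N.+1, interior i ->
     \sum_(j < N.+1 | interior j) moran s i j * v j = mu * v i) ->
  (forall j : 'I_N.+1, interior j ->
     \sum_(i < N.+1 | interior i) u i * moran s i j = mu * u j) ->
  \sum_(i < N.+1 | interior i) v i = 1 ->
  \sum_(i < N.+1 | interior i) u i * v i = 1 ->
  convex_on_nonneg phi -> phi 1 = 0 ->
  (forall p : 'I_N.+1 -> R, in_simplex p -> 0 < upair u p ->
     entropy phi u v (moran_apply s p) <= entropy phi u v p)
  /\
  (strictly_convex_on_nonneg phi ->
   forall p : 'I_N.+1 -> R, in_simplex p -> 0 < upair u p ->
     (entropy phi u v (moran_apply s p) = entropy phi u v p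
      <-> quasi_stationary v p)).
Proof.
move=> N2 s0 sN hs mu0 hu hv hev hel hv1 huv hc hphi1.
pose w (i j : 'I_N.+1) := moran s i j * v j / (mu * v i).
have F2 : forall p i, interior i ->
    moran_apply s p i = \sum_(j < N.+1 | interior j) moran s i j * p j.
  move=> p i Ii; rewrite /moran_apply (bigID (@interior N)) /= [X in _ + X]big1 ?addr0 //.
  by move=> j hj; rewrite moran_out // mul0r.
have K1 : forall p, upair u (moran_apply s p) = mu * upair u p.
  move=> p; rewrite /upair.
  under eq_bigr => i Ii do rewrite F2 // mulr_sumr.
  rewrite exchange_big /= mulr_sumr; apply: eq_bigr => j Ij.
  by rewrite mulrA -hel // mulr_suml; apply: eq_bigr => i _; rewrite mulrA.
have wsum : forall i, interior i -> \sum_(j < N.+1 | interior j) w i j = 1.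
  move=> i Ii; rewrite /w -mulr_suml hev // divff // mulf_neq0 // gt_eqF ?hv //.
have w0 : forall i j, interior i -> interior j -> 0 <= w i j.
  move=> i j Ii Ij; rewrite /w divr_ge0 ?mulr_ge0 ?moran_ge0 ?hs ?ltW ?hv ?mulr_gt0 //.
have vne : forall i, interior i -> v i != 0 by move=> k Ik; rewrite gt_eqF ?hv.
have mune : mu != 0 by rewrite gt_eqF.
have K2 : forall p, upair u p != 0 -> entropy phi u v (moran_apply s p) =
   \sum_(i < N.+1 | interior i)
      phi (\sum_(j < N.+1 | interior j) w i j * (p j / (v j * upair u p))) * v i * u i.
  move=> p Une; rewrite /entropy K1; apply: eq_bigr => i Ii.
  congr (phi _ * _ * _); rewrite F2 // mulr_suml; apply: eq_bigr => j Ij.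
  rewrite /w; field.
  by rewrite Une mune !vne.
have K3 : forall p, entropy phi u v p =
   \sum_(i < N.+1 | interior i)
      (\sum_(j < N.+1 | interior j) w i j * phi (p j / (v j * upair u p))) * v i * u i.
  move=> p; symmetry.
  under eq_bigr => i Ii do rewrite mulr_suml mulr_suml.
  rewrite exchange_big /=; apply: eq_bigr => j Ij.
  transitivity (\sum_(i < N.+1 | interior i) (u i * moran s i j) *
     (phi (p j / (v j * upair u p)) * v j / mu)).
    apply: eq_bigr => i Ii; rewrite /w; field.
    by rewrite mune !vne.
  by rewrite -mulr_suml hel //; field.
have X0 : forall p, in_simplex p -> 0 < upair u p -> forall j, interior j ->
    0 <= p j / (v j * upair u p).
  move=> p [hp _] U0 j Ij; rewrite divr_ge0 ?hp // mulr_ge0 // ltW ?hv //.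
have row : forall p i, in_simplex p -> 0 < upair u p -> interior i ->
   phi (\sum_(j < N.+1 | interior j) w i j * (p j / (v j * upair u p))) * v i * u i <=
   (\sum_(j < N.+1 | interior j) w i j * phi (p j / (v j * upair u p))) * v i * u i.
  move=> p i hp U0 Ii; rewrite ler_pM2r ?hu // ler_pM2r ?hv //.
  apply: jensen => //; [by move=> j; apply: w0 | exact: X0 | exact: wsum].
split.
  move=> p hp U0; rewrite K2 ?gt_eqF // K3; apply: ler_sum => i Ii; exact: row.
move=> hsc p hp U0; split.
- move=> heq.
  have Une : upair u p != 0 by rewrite gt_eqF.
  move: heq; rewrite K2 // K3.
  set U := upair u p; set x := fun j => p j / (v j * U).
  rewrite -/x => heq.
  have rowEq : forall i, interior i ->
      phi (\sum_(j < N.+1 | interior j) w i j * x j) =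
      \sum_(j < N.+1 | interior j) w i j * phi (x j).
    have hsum : \sum_(i < N.+1 | interior i)
       ((\sum_(j < N.+1 | interior j) w i j * phi (x j)) * v i * u i -
        phi (\sum_(j < N.+1 | interior j) w i j * x j) * v i * u i) = 0.
      by rewrite sumrB heq subrr.
    have hnn : forall i, interior i -> 0 <=
       (\sum_(j < N.+1 | interior j) w i j * phi (x j)) * v i * u i -
        phi (\sum_(j < N.+1 | interior j) w i j * x j) * v i * u i.
      by move=> k Ik; rewrite subr_ge0; exact: row.
    move=> i Ii; have := psumr_eq0P hnn hsum Ii.
    rewrite -!mulrA -mulrBl => /eqP; rewrite mulf_eq0 => /orP[/eqP h|].
      by apply/eqP; rewrite eq_sym -subr_eq0 h.
    by rewrite mulf_eq0 !gt_eqF ?hu ?hv.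
  have x0 : forall j, interior j -> 0 <= x j by move=> j Ij; exact: X0.
  have xeq : forall i j, interior i -> interior j -> 0 < w i j ->
      x j = \sum_(k < N.+1 | interior k) w i k * x k.
    move=> i j Ii Ij wp; apply/eqP; apply/negPn/negP => hne.
    have := @jensen_strict _ phi _ (@interior N) (w i) x j hc hsc
       (fun k Ik => w0 i k Ii Ik) x0 (wsum i Ii) Ij wp hne.
    by rewrite rowEq // ltxx.
  have wpos : forall i j, interior i -> interior j -> 0 < moran s i j -> 0 < w i j.
    by move=> i j Ii Ij mp; rewrite /w divr_gt0 ?mulr_gt0 ?hv.
  have step : forall i j : 'I_N.+1, interior i -> interior j -> (j : nat) = i.+1 -> x i = x j.
    move=> i j Ii Ij e.
    rewrite (xeq i i) // ?(xeq i j) //; apply: wpos => //.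
      exact: moran_sup_gt0 Ij (hs j Ij) e.
    exact: moran_diag_gt0 Ii (hs i Ii).
  have chain : forall k, (0 < k < N)%N -> x (inord k) = x (inord 1).
    elim => [|k IH] hk; first lia.
    have [->|k0] := eqVneq k 0%N; first by [].
    rewrite -IH; last lia.
    symmetry; apply: step; rewrite /interior ?inordK //; lia.
  have cst : forall j, interior j -> x j = x (inord 1).
    move=> j Ij; rewrite -(chain j) ?inord_val //.
  set c := x (inord 1) in cst.
  have pj : forall j, interior j -> p j = c * v j * U.
    move=> j Ij; rewrite -(cst j Ij) /x; field.
    by rewrite Une vne.
  have c1 : c = 1.
    have : U = c * U.
      rewrite {1}/U /upair.
      under eq_bigr => j Ij do rewrite pj //.
      rewrite -[RHS]mulr1 -huv mulr_sumr; apply: eq_bigr => j _; ring.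
    move=> /eqP; rewrite -subr_eq0 -{1}[U]mul1r -mulrBl mulf_eq0 (negbTE Une) orbF subr_eq0.
    by move=> /eqP.
  rewrite c1 in pj.
  have [hp0 hp1] := hp.
  have o0 : ~~ interior (ord0 : 'I_N.+1) by [].
  have oN : ~~ interior (ord_max : 'I_N.+1) by rewrite /interior /= ltnn andbF.
  have oneq : (ord0 : 'I_N.+1) != ord_max by apply/eqP => /(congr1 val) /=; lia.
  exists (p ord0), (p ord_max), U; split.
  + exact: hp0.
  + exact: hp0.
  + exact: ltW.
  + rewrite -hp1 (bigID (@interior N)) /=.
    have -> : \sum_(i < N.+1 | interior i) p i = U.
      by rewrite -[RHS]mulr1 -hv1 mulr_sumr; apply: eq_bigr => j Ij; rewrite pj // mul1r mulrC.
    rewrite (bigD1 ord0) //= (bigD1 ord_max) /=; last by rewrite oN eq_sym.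
    rewrite big1 ?addr0; first ring.
    move=> j /andP[/andP[Ij j0] jN]; exfalso.
    by case: (@not_interior N j Ij) => e; [move: j0 | move: jN]; rewrite e eqxx.
  + move=> i; rewrite /vhat; case: (boolP (interior i)) => Ii.
      rewrite pj // mul1r.
      have -> : (i == ord0) = false by apply/negbTE; apply: contraNneq o0 => <-.
      have -> : (i == ord_max) = false by apply/negbTE; apply: contraNneq oN => <-.
      by rewrite !mulr0 addr0 add0r mulrC.
    case: (@not_interior N i Ii) => ->.
      by rewrite eqxx (negbTE oneq) !mulr0 mulr1 !addr0.
    by rewrite eqxx eq_sym (negbTE oneq) !mulr0 mulr1 !add0r.
- move=> [a [b [l [a0 b0 l0 _ hpi]]]].
  have Une : upair u p != 0 by rewrite gt_eqF.
  have pj : forall j, interior j -> p j = l * v j.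
    move=> j Ij; rewrite hpi /vhat Ij.
    have -> : (j == ord0) = false by apply/negbTE; apply: contraTneq Ij => ->.
    have -> : (j == ord_max) = false.
      by apply/negbTE; apply: contraTneq Ij => ->; rewrite /interior /= ltnn andbF.
    by rewrite !mulr0 addr0 add0r.
  have Ul : upair u p = l.
    rewrite /upair -[RHS]mulr1 -huv mulr_sumr; apply: eq_bigr => j Ij; rewrite pj //; ring.
  have x1 : forall j, interior j -> p j / (v j * upair u p) = 1.
    move=> j Ij; rewrite pj // Ul; field.
    by rewrite vne // -Ul Une.
  rewrite K2 // K3 !big1 //.
    move=> i Ii; rewrite big1 ?mul0r //.
    by move=> j Ij; rewrite x1 // hphi1 mulr0.
  move=> i Ii.
  under eq_bigr => j Ij do rewrite x1 // mulr1.
  by rewrite wsum // hphi1 !mul0r.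
Qed.
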